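(* Let $n_1,n_2\ge1$, $n=n_1n_2$, and let $R=(r_{i,j})_{i,j=0}^{n-1}$ be a Hermitian positive definite block Toeplitz matrix with $n_2\times n_2$ blocks of size $n_1\times n_1$ (i.e. $R=(R_{b-a})_{a,b=0}^{n_2-1}$, $R_m\in\mathbb{C}^{n_1\times n_1}$, $R_{-m}=R_m^H$). Define $n_1\times n_1$ matrices $P_0,\dots,P_{n_2-1}$ and $Q_0,\dots,Q_{n_2-1}$ by $$\begin{bmatrix}P_0\\ P_1\\ \vdots\\ P_{n_2-1}\end{bmatrix}:=\big[p_{0,n-1}\ p_{1,n-1}\ \cdots\ p_{n_1-1,n-1}\big],\qquad \begin{bmatrix}Q_{n_2-1}\\ \vdots\\ Q_1\\ Q_0\end{bmatrix}:=\big[q_{0,n-n_1}\ \cdots\ q_{0,n-2}\ q_{0,n-1}\big],$$ and the diagonal matrices $V'=\mathrm{diag}(v'_{0,n-1},v'_{1,n-1},\dots,v'_{n_1-1,n-1})$, $V=\mathrm{diag}(v_{0,n-n_1},\dots,v_{0,n-2},v_{0,n-1})$. Let $L_p$ be the $n\times n$ block upper triangular block Toeplitz matrix whose $(a,b)$ block is $P_{b-a}^T$ for $b\ge a$ and $0$ for $b<a$, and $L_q$ the $n\times n$ block Toeplitz matrix whose $(a,b)$ block is $Q_{n_2-(b-a)}^T$ for $b>a$ and $0$ for $b\le a$ ($0\le a,b\le n_2-1$). Let $D(M)$ denote the $n\times n$ block diagonal matrix with $n_2$ diagonal blocks all equal to $M$. Then $$R^{-1}=L_p^{H}\,D(V'^{-1})\,L_p-L_q^{H}\,D(V^{-1})\,L_q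 .$$
   Context: $X^H$ denotes the conjugate transpose. Let $e_0,\dots,e_{n-1}$ be the canonical basis column vectors of $\mathbb{C}^n$. Generalized reflection coefficients of $R$: $p_{k,k}=q_{k,k}=e_k$ for $0\le k\le n-1$; $v_{k,l}:=q_{k,l}^TRe_l$, $v'_{k,l}:=p_{k,l}^TRe_k$ (positive reals); and for $0\le k<l\le n-1$, recursively in $l-k$: $a_{k,l}=\dfrac{p_{k,l-1}^TRe_l}{v_{k+1,l}}$, $a'_{k,l}=\dfrac{q_{k+1,l}^TRe_k}{v'_{k,l-1}}$, $p_{k,l}=p_{k,l-1}-a_{k,l}q_{k+1,l}$, $q_{k,l}=q_{k+1,l}-a'_{k,l}p_{k,l-1}$. *)

(* Defs.v *)
(* Complex numbers: an arbitrary numClosedFieldType C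
   (e.g. algC, or complex R over a real closed field); conjugation z^*. *)
From HB Require Import structures.
From mathcomp Require Import all_boot all_order all_algebra.
Set Implicit Arguments. Unset Strict Implicit. Unset Printing Implicit Defensive.
Import Order.TTheory GRing.Theory Num.Theory.
Local Open Scope ring_scope.

Section Defs.
Variable C : numClosedFieldType.

Definition ctr m k (X : 'M[C]_(m, k)) : 'M[C]_(k, m) := (map_mx (fun z => z^*) X)^T.

(* entry of a matrix at natural-number indices (0 outside the range) *)
Definition mxn m k (M : 'M[C]_(m, k)) (i j : nat) : C :=
  match (insub i : option 'I_m), (insub j : option 'I_k) with
  | Some i', Some j' => M i' j'
  | _, _ => 0
  end.

Definition ecv n (k : nat) : 'cV[C]_n := \col_(i < n) (i == k :> nat)%:R.

Definition bil n (x : 'cV[C]_n) (R : 'M[C]_n) (y : 'cV[C]_n) : C :=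
  (x^T *m R *m y) 0 0.

(* pq R d k = (p_{k,k+d}, q_{k,k+d}), defined recursively in d = l - k *)
Fixpoint pq n (R : 'M[C]_n) (d : nat) : nat -> 'cV[C]_n * 'cV[C]_n :=
  match d with
  | 0 => fun k => (ecv n k, ecv n k)
  | d'.+1 => fun k =>
      let l := (k + d'.+1)%N in
      let p_k_lm1 := (pq R d' k).1 in
      let q_kp1_l := (pq R d' k.+1).2 in
      let a  := bil p_k_lm1 R (ecv n l) / bil q_kp1_l R (ecv n l) in
      let a' := bil q_kp1_l R (ecv n k) / bil p_k_lm1 R (ecv n k) in
      (p_k_lm1 - a *: q_kp1_l, q_kp1_l - a' *: p_k_lm1)
  end.

Definition pvec n (R : 'M[C]_n) (k l : nat) : 'cV[C]_n := (pq R (l - k) k).1.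
Definition qvec n (R : 'M[C]_n) (k l : nat) : 'cV[C]_n := (pq R (l - k) k).2.
Definition vcoef n (R : 'M[C]_n) (k l : nat) : C := bil (qvec R k l) R (ecv n l).
Definition vcoef' n (R : 'M[C]_n) (k l : nat) : C := bil (pvec R k l) R (ecv n k).

Definition herm_mx n (R : 'M[C]_n) : Prop := ctr R = R.
Definition posdef n (R : 'M[C]_n) : Prop :=
  forall x : 'cV[C]_n, x != 0 -> 0 < (ctr x *m R *m x) 0 0.

(* R = (R_{b-a})_{a,b} with n1 x n1 blocks: entry (a*n1+i1, b*n1+j1) depends
   only on b - a, i1, j1. *)
Definition block_toeplitz n1 n2 (R : 'M[C]_(n1 * n2)) : Prop :=
  forall i j i' j' : 'I_(n1 * n2),
    (i %% n1 = i' %% n1)%N -> (j %% n1 = j' %% n1)%N ->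
    (j %/ n1 + i' %/ n1 = j' %/ n1 + i %/ n1)%N -> R i j = R i' j'.

Section Blocks.
Variables n1 n2 : nat.
Variable R : 'M[C]_(n1 * n2).
Let n := (n1 * n2)%N.

Definition Pblk (m : nat) : 'M[C]_n1 :=
  \matrix_(i1 < n1, j < n1) mxn (pvec R j n.-1) (m * n1 + i1)%N 0.
Definition Qblk (m : nat) : 'M[C]_n1 :=
  \matrix_(i1 < n1, j < n1) mxn (qvec R 0 (n - n1 + j)%N) ((n2.-1 - m) * n1 + i1)%N 0.
Definition Vp : 'M[C]_n1 := \matrix_(i < n1, j < n1) ((i == j)%:R * vcoef' R i n.-1).
Definition Vq : 'M[C]_n1 := \matrix_(i < n1, j < n1) ((i == j)%:R * vcoef R 0 (n - n1 + i)%N).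

Definition Lp : 'M[C]_n :=
  \matrix_(i < n, j < n)
    if (i %/ n1 <= j %/ n1)%N
    then mxn (Pblk (j %/ n1 - i %/ n1)%N)^T (i %% n1)%N (j %% n1)%N else 0.
Definition Lq : 'M[C]_n :=
  \matrix_(i < n, j < n)
    if (i %/ n1 < j %/ n1)%N
    then mxn (Qblk (n2 - (j %/ n1 - i %/ n1))%N)^T (i %% n1)%N (j %% n1)%N else 0.
End Blocks.

Definition blkdiag n1 n2 (M : 'M[C]_n1) : 'M[C]_(n1 * n2) :=
  \matrix_(i < n1 * n2, j < n1 * n2)
    if (i %/ n1 == j %/ n1)%N then mxn M (i %% n1)%N (j %% n1)%N else 0.
End Defs.

(* Main.v *)
Require Import Defs.
From HB Require Import structures.
From mathcomp Require Import all_boot all_order all_algebra.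
From mathcomp Require Import zify ring.
Set Implicit Arguments. Unset Strict Implicit. Unset Printing Implicit Defensive.
Import Order.TTheory GRing.Theory Num.Theory.
Local Open Scope ring_scope.

Section Basic.
Variable C : numClosedFieldType.
Local Notation ecv := (ecv C).

Lemma mxnE m k (M : 'M[C]_(m, k)) (i : 'I_m) (j : 'I_k) : mxn M i j = M i j.
Proof. by rewrite /mxn !valK. Qed.

Lemma mxn_outl m k (M : 'M[C]_(m, k)) i j : (m <= i)%N -> mxn M i j = 0.
Proof. by move=> h; rewrite /mxn insubN // -leqNgt. Qed.

Lemma mxn_outr m k (M : 'M[C]_(m, k)) i j : (k <= j)%N -> mxn M i j = 0.
Proof. move=> h; rewrite /mxn; case: insub => // a; by rewrite insubN // -leqNgt. Qed.

Lemma mxn_ord m k (M : 'M[C]_(m, k)) i j (hi : (i < m)%N) (hj : (j < k)%N) :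
  mxn M i j = M (Ordinal hi) (Ordinal hj).
Proof. by rewrite -mxnE. Qed.

Lemma mulmx_nat m (A B : 'M[C]_m) i j :
  mxn (A *m B) i j = \sum_(0 <= t < m) mxn A i t * mxn B t j.
Proof.
case: (ltnP i m) => hi; last first.
  rewrite mxn_outl // big1 // => t _; by rewrite mxn_outl // mul0r.
case: (ltnP j m) => hj; last first.
  rewrite mxn_outr // big1 // => t _; by rewrite (mxn_outr B) // mulr0.
rewrite !mxn_ord mxE big_mkord; apply: eq_bigr => t _.
by rewrite -[nat_of_ord t]/(nat_of_ord t) -(mxnE A) -(mxnE B).
Qed.

Lemma colE p n (A : 'M[C]_(p, n)) i (m : 'I_n) : (A *m ecv n m) i 0 = A i m.
Proof.
rewrite mxE (bigD1 m) //= big1 ?addr0 => [|t /negPf htm]; rewrite !mxE ?eqxx ?mulr1 //.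
by rewrite [(_ == _ :> nat)]htm mulr0.
Qed.

Lemma col_eq n (A B : 'M[C]_n) : (forall m : 'I_n, A *m ecv n m = B *m ecv n m) -> A = B.
Proof.
move=> h; apply/matrixP => i m; by rewrite -(colE A i) -(colE B i) h.
Qed.

Lemma mul1_ecv n (m : 'I_n) : (1%:M : 'M[C]_n) *m ecv n m = ecv n m.
Proof. by rewrite mul1mx. Qed.

Lemma ecvE n (m i : 'I_n) : ecv n m i 0 = (i == m)%:R.
Proof. by rewrite mxE. Qed.

Definition conjv n (x : 'cV[C]_n) : 'cV[C]_n := map_mx (fun z => z^*) x.

Lemma conjvE n (x : 'cV[C]_n) i : conjv x i 0 = (x i 0)^*.
Proof. by rewrite mxE. Qed.

Lemma ctr_conjv n (x : 'cV[C]_n) : ctr (conjv x) = x^T.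
Proof. by apply/matrixP => i j; rewrite !mxE conjCK. Qed.

Lemma bil_e n x (R : 'M[C]_n) (l : 'I_n) : bil x R (ecv n l) = (x^T *m R) 0 l.
Proof. by rewrite /bil colE. Qed.

Lemma bil_exp n x (R : 'M[C]_n) z : bil x R z = \sum_(s < n) bil x R (ecv n s) * z s 0.
Proof. rewrite {1}/bil mxE; apply: eq_bigr => s _; by rewrite bil_e. Qed.

Lemma bilBl n x y c (R : 'M[C]_n) z : bil (x - c *: y) R z = bil x R z - c * bil y R z.
Proof. by rewrite /bil linearB /= linearZ /= !mulmxBl -!scalemxAl !mxE. Qed.

Lemma bilBr n x (R : 'M[C]_n) y z : bil x R (y - z) = bil x R y - bil x R z.
Proof. by rewrite /bil mulmxBr !mxE. Qed.

Lemma bil_sumr n x (R : 'M[C]_n) (I : finType) (P : pred I) (c : I -> C) (g : I -> 'cV[C]_n) :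
  bil x R (\sum_(j | P j) c j *: g j) = \sum_(j | P j) c j * bil x R (g j).
Proof. rewrite /bil mulmx_sumr summxE; apply: eq_bigr => j _; by rewrite -scalemxAr mxE. Qed.


Section Lev.
Variable n : nat.
Variable R : 'M[C]_n.
Hypothesis Hherm : herm_mx R.
Hypothesis Hpd : posdef R.

Lemma hermE i j : R i j = (R j i)^*.
Proof. by rewrite -{1}Hherm !mxE. Qed.

Lemma bil_full (x z : 'cV[C]_n) : bil x R z = \sum_(s < n) \sum_(t < n) x t 0 * R t s * z s 0.
Proof.
rewrite /bil mxE; apply: eq_bigr => s _; rewrite mxE mulr_suml; apply: eq_bigr => t _.
by rewrite !mxE.
Qed.

Lemma bil_conj (x y : 'cV[C]_n) : bil x R (conjv y) = (bil y R (conjv x))^*.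
Proof.
rewrite !bil_full rmorph_sum /= exchange_big; apply: eq_bigr => s _.
rewrite rmorph_sum; apply: eq_bigr => t _.
rewrite !rmorphM /= !conjvE conjCK [R t s]hermE conjCK; ring.
Qed.

Lemma quad (x : 'cV[C]_n) : (ctr (conjv x) *m R *m conjv x) 0 0 = bil x R (conjv x).
Proof. by rewrite ctr_conjv. Qed.

Lemma pos_single (x : 'cV[C]_n) (t : 'I_n) : x t 0 = 1 ->
  (forall s : 'I_n, s != t -> bil x R (ecv n s) * (x s 0)^* = 0) ->
  0 < bil x R (ecv n t).
Proof.
move=> ht hs.
have nz : conjv x != 0.
  apply/eqP => h; have := congr1 (fun M : 'cV[C]_n => M t 0) h.
  by rewrite conjvE ht conjC1 mxE => /eqP; rewrite oner_eq0.
have := Hpd nz; rewrite quad bil_exp (bigD1 t) //= big1 ?addr0.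
  by rewrite conjvE ht conjC1 mulr1.
by move=> s /hs; rewrite conjvE.
Qed.

Lemma pq_spec d : forall k, (k + d < n)%N ->
 [/\ (forall i : 'I_n, ((i < k) || (k + d < i))%N -> (pq R d k).1 i 0 = 0),
     (forall i : 'I_n, i = k :> nat -> (pq R d k).1 i 0 = 1) &
     (forall l : 'I_n, (k < l <= k + d)%N -> bil (pq R d k).1 R (ecv n l) = 0)] /\
 [/\ (forall i : 'I_n, ((i < k) || (k + d < i))%N -> (pq R d k).2 i 0 = 0),
     (forall i : 'I_n, i = (k + d)%N :> nat -> (pq R d k).2 i 0 = 1) &
     (forall l : 'I_n, (k <= l < k + d)%N -> bil (pq R d k).2 R (ecv n l) = 0)].
Proof.
elim: d => [|d IH] k hk.
  split; split => /=.
  - move=> i hi; rewrite mxE (_ : (i == k :> nat) = false) //; apply/eqP; lia.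
  - by move=> i hi; rewrite mxE hi eqxx.
  - move=> l hl; exfalso; lia.
  - move=> i hi; rewrite mxE (_ : (i == k :> nat) = false) //; apply/eqP; lia.
  - by move=> i hi; rewrite mxE hi addn0 eqxx.
  - move=> l hl; exfalso; lia.
have hk1 : (k + d < n)%N by lia.
have hk2 : (k.+1 + d < n)%N by lia.
have hkn : (k < n)%N by lia.
case: (IH k hk1) => [[p0 p1 p2] _]; case: (IH k.+1 hk2) => [_ [q0 q1 q2]].
move: p0 p1 p2 q0 q1 q2.
set p' := (pq R d k).1; set q' := (pq R d k.+1).2 => p0 p1 p2 q0 q1 q2.
have vq : 0 < bil q' R (ecv n (k + d.+1)).
  apply: (@pos_single q' (Ordinal hk)).
    by apply: q1 => /=; rewrite addSnnS.
  move=> s hsL.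
  have hsL' : (s : nat) <> (k + d.+1)%N by move=> e; move/eqP: hsL; apply; apply: val_inj.
  case h: ((k.+1 <= s) && (s < k.+1 + d))%N.
    by rewrite q2 // mul0r.
  by rewrite q0 ?conjC0 ?mulr0 //; move/negbT: h; lia.
have vp : 0 < bil p' R (ecv n k).
  apply: (@pos_single p' (Ordinal hkn)).
    by apply: p1.
  move=> s hsK.
  have hsK' : (s : nat) <> k by move=> e; move/eqP: hsK; apply; apply: val_inj.
  case h: ((k < s) && (s <= k + d))%N.
    by rewrite p2 // mul0r.
  by rewrite p0 ?conjC0 ?mulr0 //; move/negbT: h; lia.
have vq0 : bil q' R (ecv n (k + d.+1)) != 0 by rewrite gt_eqF.
have vp0 : bil p' R (ecv n k) != 0 by rewrite gt_eqF.
split; split => /=.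
- move=> i hi; rewrite !mxE p0 ?q0 ?mulr0 ?subr0 //; lia.
- move=> i hi; rewrite !mxE p1 // q0 ?mulr0 ?subr0 //; lia.
- move=> l hl; rewrite bilBl.
  case: (ltnP l (k + d.+1)) => hl2.
    by rewrite p2 ?q2 ?mulr0 ?subr0 //; lia.
  have -> : (l : nat) = (k + d.+1)%N by lia.
  by rewrite divfK // subrr.
- move=> i hi; rewrite !mxE p0 ?q0 ?mulr0 ?subr0 //; lia.
- move=> i hi; rewrite !mxE q1 ?p0 ?mulr0 ?subr0 //; lia.
- move=> l hl; rewrite bilBl.
  case: (ltnP k l) => hl2.
    by rewrite p2 ?q2 ?mulr0 ?subr0 //; lia.
  have -> : (l : nat) = k by lia.
  by rewrite divfK // subrr.
Qed.


Lemma uniq0 (D : 'M[C]_n) k : (forall i j : 'I_n, (j < k)%N -> D i j = 0) ->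
  (forall m : 'I_n, (k <= m)%N -> D *m R *m ecv n m = 0) -> D = 0.
Proof.
move=> h0 h1; apply/matrixP => i s.
set d := (row i D)^T.
have hq : bil d R (conjv d) = 0.
  rewrite bil_exp big1 // => t _.
  case: (ltnP t k) => ht.
    by rewrite conjvE /d !mxE h0 // conjC0 mulr0.
  rewrite bil_e /d trmxK -row_mul mxE -(colE (D *m R) i t) h1 // mxE mul0r //.
have : conjv d == 0.
  apply/negPn/negP => nz; have := Hpd nz; by rewrite quad hq ltxx.
move/eqP/matrixP/(_ s 0); rewrite conjvE /d !mxE => /eqP; rewrite conjC_eq0 => /eqP //.
Qed.

Section Fam.
Variable I : 'I_n -> bool.
Variable rk : 'I_n -> nat.
Hypothesis rk_inj : injective rk.
Variable f : 'I_n -> 'cV[C]_n.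
Hypothesis H1 : forall j s, I j -> (~~ I s || (rk s < rk j))%N -> f j s 0 = 0.
Hypothesis H2 : forall j, I j -> f j j 0 = 1.
Hypothesis H3 : forall j s, I j -> (rk j < rk s)%N -> bil (f j) R (ecv n s) = 0.

Definition vf j := bil (f j) R (ecv n j).

Lemma vf_gt0 j : I j -> 0 < vf j.
Proof.
move=> Ij; apply: pos_single; first exact: H2.
move=> s hs; case: (ltngtP (rk j) (rk s)) => h.
- by rewrite H3 // mul0r.
- by rewrite H1 ?h ?orbT // conjC0 mulr0.
- by move/rk_inj: h => e; rewrite e eqxx in hs.
Qed.

Lemma vf_neq0 j : I j -> vf j != 0.
Proof. by move=> Ij; rewrite gt_eqF // vf_gt0. Qed.

Lemma G_lt i j : I i -> I j -> (rk i < rk j)%N -> bil (f i) R (conjv (f j)) = 0.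
Proof.
move=> Ii Ij h; rewrite bil_exp big1 // => s _; rewrite conjvE.
case: (ltnP (rk i) (rk s)) => h2; first by rewrite H3 // mul0r.
rewrite H1 ?conjC0 ?mulr0 //; apply/orP; right; exact: leq_ltn_trans h2 h.
Qed.

Lemma G i j : I i -> I j -> bil (f i) R (conjv (f j)) = if i == j then vf i else 0.
Proof.
move=> Ii Ij; case: eqP => [<-|ne].
  rewrite bil_exp (bigD1 i) //= big1 ?addr0; first by rewrite conjvE H2 // conjC1 mulr1.
  move=> s hs; rewrite conjvE; case: (ltngtP (rk i) (rk s)) => h.
  - by rewrite H3 // mul0r.
  - by rewrite H1 ?h ?orbT // conjC0 mulr0.
  - by move/rk_inj: h => e; rewrite e eqxx in hs.
case: (ltngtP (rk i) (rk j)) => h.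
- exact: G_lt.
- by rewrite bil_conj // G_lt // conjC0.
- by move/rk_inj: h => e; rewrite e in ne.
Qed.

Lemma tri (z : 'cV[C]_n) : (forall s, ~~ I s -> z s 0 = 0) ->
  (forall i, I i -> bil (f i) R z = 0) -> z = 0.
Proof.
move=> hz hb.
suff H : forall t (s : 'I_n), (rk s < t)%N -> z s 0 = 0.
  apply/matrixP => s c; rewrite [c]ord1 mxE; exact: (H (rk s).+1).
elim=> [//|t IH] s hs.
case: (ltnP (rk s) t) => h; first exact: IH.
case Is: (I s); last by rewrite hz ?Is.
have := hb s Is; rewrite bil_exp (bigD1 s) //= big1 ?addr0.
  move/eqP; rewrite mulf_eq0 -/(vf s) (negbTE (vf_neq0 Is)) /= => /eqP //.
move=> u hu; case: (ltngtP (rk s) (rk u)) => h2.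
- by rewrite H3 // mul0r.
- by rewrite IH ?mulr0 //; lia.
- by move/rk_inj: h2 => e; rewrite e eqxx in hu.
Qed.

Definition Wm := \sum_(j | I j) (vf j)^-1 *: (conjv (f j) *m (f j)^T).

Lemma Wentry a b : Wm a b = \sum_(j | I j) (vf j)^-1 * ((f j a 0)^* * f j b 0).
Proof.
rewrite summxE; apply: eq_bigr => j _; rewrite mxE [in LHS]mxE big_ord1 !mxE //.
Qed.

Lemma W_supp a b : ~~ I a || ~~ I b -> Wm a b = 0.
Proof.
move=> h; rewrite Wentry big1 // => j Ij.
case/orP: h => h.
  by rewrite (H1 (s:=a)) ?h // conjC0 mul0r mulr0.
by rewrite (H1 (s:=b)) ?h ?orbT // !mulr0.
Qed.

Lemma W_col m : I m -> Wm *m R *m ecv n m = ecv n m.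
Proof.
move=> Im.
pose c := fun j => bil (f j) R (ecv n m) / vf j.
have -> : Wm *m R *m ecv n m = \sum_(j | I j) c j *: conjv (f j).
  rewrite !mulmx_suml; apply: eq_bigr => j Ij.
  rewrite -!scalemxAl -!mulmxA.
  have -> : (f j)^T *m (R *m ecv n m) = (bil (f j) R (ecv n m))%:M.
    apply/matrixP => a b; by rewrite [a]ord1 [b]ord1 mulmxA [RHS]mxE eqxx mulr1n.
  by rewrite -scalemx1 -scalemxAr mulmx1 scalerA /c mulrC.
apply/eqP; rewrite -subr_eq0; apply/eqP; apply: tri.
- move=> s Is; rewrite !mxE summxE big1 => [|j Ij]; last by rewrite !mxE H1 ?Is // conjC0 mulr0.
  have hsm : (s == m :> nat) = false.
    by apply/negbTE; apply: contraNneq Is => e; rewrite (val_inj e).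
  by rewrite hsm subrr.
- move=> i Ii; rewrite bilBr bil_sumr (bigD1 i) //= big1 ?addr0 => [|j /andP [Ij ne]].
    by rewrite G // eqxx /c divfK ?vf_neq0 // subrr.
  by rewrite G // eq_sym (negbTE ne) mulr0.
Qed.

Lemma W_inv : (forall j, I j) -> Wm *m R = 1%:M.
Proof. by move=> hI; apply: col_eq => m; rewrite W_col // mul1mx. Qed.

End Fam.

End Lev.

Lemma sum_delta (F : nat -> C) t N : (t < N)%N ->
  (forall s, (s < N)%N -> s <> t -> F s = 0) -> \sum_(0 <= s < N) F s = F t.
Proof.
move=> ht h; rewrite big_mkord (bigD1 (Ordinal ht)) //= big1 ?addr0 // => s hs.
apply: h => // e; move/eqP: hs; apply; exact: val_inj.
Qed.

Lemma sum_reidx (G : nat -> C) n1 N :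
  \sum_(0 <= t < n1 * N) G t = \sum_(0 <= q < N) \sum_(0 <= r < n1) G (q * n1 + r)%N.
Proof.
rewrite mulnC.
elim: N => [|N IH]; first by rewrite mul0n !big_geq.
rewrite big_nat_recr //= -IH (big_cat_nat (n := N * n1)) //=; last by rewrite mulSn; lia.
congr (_ + _); rewrite mulSn addnC -{1}[(N * n1)%N]add0n big_addn.
have -> : (N * n1 + n1 - N * n1 = n1)%N by lia.
by apply: eq_bigr => r _; rewrite addnC.
Qed.

Lemma diag_inv k (Vd : 'M[C]_k) (d : nat -> C) :
  (forall i j : 'I_k, Vd i j = (i == j)%:R * d i) -> (forall i : 'I_k, d i != 0) ->
  invmx Vd = \matrix_(i < k, j < k) ((i == j)%:R * (d i)^-1).
Proof.
move=> hV hd.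
set Dm := \matrix_(i < k, j < k) _.
have h : Vd *m Dm = 1%:M.
  apply/matrixP => i j; rewrite !mxE (bigD1 i) //= big1 ?addr0 => [|l hl].
    by rewrite hV !mxE eqxx mul1r mulrCA mulfV // mulr1.
  by rewrite hV eq_sym (negbTE hl) !mul0r.
have [uV _] := mulmx1_unit h.
by rewrite -[invmx Vd]mulmx1 -h mulmxA mulVmx // mul1mx.
Qed.

End Basic.

Section Main.
Variable C : numClosedFieldType.
Local Notation ecv := (ecv C).
Variables n1 n2 : nat.
Hypothesis Hn1 : (1 <= n1)%N.
Hypothesis Hn2 : (1 <= n2)%N.
Local Notation n := (n1 * n2)%N.
Variable R : 'M[C]_n.
Hypothesis Hherm : herm_mx R.
Hypothesis Hpd : posdef R.
Hypothesis Htoep : block_toeplitz R.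

Lemma n_gt0 : (0 < n)%N.
Proof. by rewrite muln_gt0; apply/andP. Qed.

Definition fp (j : 'I_n) : 'cV[C]_n := pvec R j n.-1.
Definition Ip k (j : 'I_n) : bool := (k <= j)%N.
Definition rkp (j : 'I_n) : nat := j.
Definition fq (l : 'I_n) : 'cV[C]_n := qvec R 0 l.
Definition Iq m (l : 'I_n) : bool := (l < m)%N.
Definition rkq (l : 'I_n) : nat := (n - l)%N.

Lemma rkp_inj : injective rkp.
Proof. by move=> a b; apply: val_inj. Qed.

Lemma rkq_inj : injective rkq.
Proof. move=> a b; rewrite /rkq => e; apply: val_inj => /=; have := ltn_ord a; have := ltn_ord b; lia. Qed.

Lemma pspec (j : 'I_n) :
  [/\ (forall i : 'I_n, ((i < j) || (j + (n.-1 - j) < i))%N -> fp j i 0 = 0),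
     (forall i : 'I_n, i = j :> nat -> fp j i 0 = 1) &
     (forall l : 'I_n, (j < l <= j + (n.-1 - j))%N -> bil (fp j) R (ecv n l) = 0)].
Proof. have := ltn_ord j; have := n_gt0 => h1 h2. by case: (pq_spec Hpd (d := (n.-1 - j)%N) (k := j)); first lia. Qed.

Lemma qspec (l : 'I_n) :
  [/\ (forall i : 'I_n, ((i < 0) || (0 + (l - 0) < i))%N -> fq l i 0 = 0),
     (forall i : 'I_n, i = (0 + (l - 0))%N :> nat -> fq l i 0 = 1) &
     (forall s : 'I_n, (0 <= s < 0 + (l - 0))%N -> bil (fq l) R (ecv n s) = 0)].
Proof. have := ltn_ord l => h. by case: (pq_spec Hpd (d := (l - 0)%N) (k := 0%N)); first lia. Qed.

Lemma Hp1 k j s : Ip k j -> (~~ Ip k s || (rkp s < rkp j))%N -> fp j s 0 = 0.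
Proof.
rewrite /Ip /rkp => h1 h2; case: (pspec j) => p0 _ _; apply: p0.
apply/orP; left; move: h1 h2; lia.
Qed.
Lemma Hp2 k j : Ip k j -> fp j j 0 = 1.
Proof. by move=> _; case: (pspec j) => _ p1 _; apply: p1. Qed.
Lemma Hp3 k j s : Ip k j -> (rkp j < rkp s)%N -> bil (fp j) R (ecv n s) = 0.
Proof.
rewrite /rkp => _ h; case: (pspec j) => _ _ p2; apply: p2.
have := ltn_ord s; have := n_gt0; move: h; lia.
Qed.
Lemma Hq1 m j s : Iq m j -> (~~ Iq m s || (rkq s < rkq j))%N -> fq j s 0 = 0.
Proof.
rewrite /Iq /rkq => h1 h2; case: (qspec j) => q0 _ _; apply: q0.
have := ltn_ord s; have := ltn_ord j; move: h1 h2; lia.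
Qed.
Lemma Hq2 m j : Iq m j -> fq j j 0 = 1.
Proof. by move=> _; case: (qspec j) => _ q1 _; apply: q1; rewrite subn0. Qed.
Lemma Hq3 m j s : Iq m j -> (rkq j < rkq s)%N -> bil (fq j) R (ecv n s) = 0.
Proof.
rewrite /rkq => _ h; case: (qspec j) => _ _ q2; apply: q2.
have := ltn_ord s; have := ltn_ord j; move: h; lia.
Qed.

Definition Wp k := Wm R (Ip k) fp.
Definition Uq m := Wm R (Iq m) fq.

Lemma Wp_col k (m : 'I_n) : (k <= m)%N -> Wp k *m R *m ecv n m = ecv n m.
Proof.
move=> h; apply: (W_col Hherm Hpd rkp_inj (@Hp1 k) (@Hp2 k) (@Hp3 k)); exact: h.
Qed.
Lemma Uq_col k (m : 'I_n) : (m < k)%N -> Uq k *m R *m ecv n m = ecv n m.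
Proof.
move=> h; apply: (W_col Hherm Hpd rkq_inj (@Hq1 k) (@Hq2 k) (@Hq3 k)); exact: h.
Qed.

Lemma inv_of (W : 'M[C]_n) : W *m R = 1%:M -> invmx R = W.
Proof.
move=> h; have [_ uR] := mulmx1_unit h.
by rewrite -[W]mulmx1 -(mulmxV uR) mulmxA h mul1mx.
Qed.

Lemma invR_Wp : invmx R = Wp 0.
Proof. apply: inv_of; apply: col_eq => m; by rewrite Wp_col // mul1mx. Qed.
Lemma invR_Uq : invmx R = Uq n.
Proof. apply: inv_of; apply: col_eq => m; by rewrite Uq_col // mul1mx. Qed.


Definition pe k a := mxn (pvec R k n.-1) a 0.
Definition vp k := vcoef' R k n.-1.
Definition alpha a b := \sum_(0 <= k < n1) (vp k)^-1 * ((pe k a)^* * pe k b).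
Definition qe k a := mxn (qvec R 0 (n - n1 + k)) a 0.
Definition vq k := vcoef R 0 (n - n1 + k).
Definition beta a b := \sum_(0 <= k < n1) (vq k)^-1 * ((qe k a)^* * qe k b).

Lemma n1_le_n : (n1 <= n)%N.
Proof. by rewrite leq_pmulr. Qed.

Lemma R1 a b (ha : (a < n)%N) (hb : (b < n)%N) :
  mxn (invmx R) a b = alpha a b + mxn (Wp n1) a b.
Proof.
rewrite invR_Wp !(mxn_ord _ ha hb) /Wp !Wentry (bigID (fun j : 'I_n => (j < n1)%N)) /=.
congr (_ + _); last by apply: eq_bigl => j; rewrite /Ip ?leq0n -leqNgt.
rewrite (eq_bigl (fun j : 'I_n => (j < n1)%N)); last by move=> j; rewrite /Ip ?leq0n.
rewrite /alpha (big_nat_widen 0 n1 n) ?n1_le_n // big_mkord; apply: eq_big => // j _.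
by rewrite /pe (mxn_ord _ ha (ltn0Sn 0)) (mxn_ord _ hb (ltn0Sn 0)).
Qed.

Lemma R2 a b (ha : (a < n)%N) (hb : (b < n)%N) :
  mxn (invmx R) a b = mxn (Uq (n - n1)) a b + beta a b.
Proof.
rewrite invR_Uq !(mxn_ord _ ha hb) /Uq !Wentry (bigID (fun j : 'I_n => (j < n - n1)%N)) /=.
congr (_ + _).
  by apply: eq_bigl => j; rewrite /Iq ltn_ord.
pose G j := (vcoef R 0 j)^-1 * ((mxn (qvec R 0 j) a 0)^* * mxn (qvec R 0 j) b 0).
rewrite (eq_big (fun j : 'I_n => (n - n1 <= j)%N) (fun j : 'I_n => G j)); first last.
- by move=> j _; rewrite /G (mxn_ord _ ha (ltn0Sn 0)) (mxn_ord _ hb (ltn0Sn 0)).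
- by move=> j; rewrite /Iq ltn_ord /= -leqNgt.
rewrite -(big_mkord (fun j => (n - n1 <= j)%N) G).
have e1 : \sum_((n - n1)%N <= j < n) G j = \sum_(0 <= j < n | (n - n1 <= j)%N) G j.
  by rewrite (big_nat_widenl _ 0) //.
rewrite -e1 -{1}[(n - n1)%N]add0n big_addn.
have -> : (n - (n - n1) = n1)%N by have := n1_le_n; lia.
by apply: eq_bigr => k _; rewrite /G addnC.
Qed.

Lemma toepN a b : (a + n1 < n)%N -> (b + n1 < n)%N -> mxn R (a + n1) (b + n1) = mxn R a b.
Proof.
move=> ha hb.
have ha' : (a < n)%N by lia.
have hb' : (b < n)%N by lia.
rewrite (mxn_ord _ ha hb) (mxn_ord _ ha' hb'); apply: Htoep => /=.
- by rewrite modnDr.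
- by rewrite modnDr.
- have dD : forall x, ((x + n1) %/ n1 = (x %/ n1).+1)%N.
    by move=> x; rewrite addnC -[X in (X + _)%N]mul1n divnMDl.
  rewrite !dD; lia.
Qed.


Definition Sh : 'M[C]_n := \matrix_(i < n, j < n)
  (if ((n1 <= i) && (n1 <= j))%N then mxn (Uq (n - n1)) (i - n1) (j - n1) else 0).

Lemma Ucol0 a c : (n - n1 <= c)%N -> mxn (Uq (n - n1)) a c = 0.
Proof.
move=> h; case: (ltnP a n) => ha; last by rewrite mxn_outl.
case: (ltnP c n) => hc; last by rewrite mxn_outr.
rewrite (mxn_ord _ ha hc) (W_supp R (@Hq1 (n - n1))) //; apply/orP; right.
by rewrite /Iq /= -leqNgt.
Qed.

Lemma UR a b : (a < n)%N -> (b < n - n1)%N -> mxn (Uq (n - n1) *m R) a b = (a == b)%:R.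
Proof.
move=> ha hb; have hb' : (b < n)%N by lia.
by rewrite (mxn_ord _ ha hb') -(colE _ _ (Ordinal hb')) Uq_col // mxE.
Qed.

Lemma mxn_Sh i t : (i < n)%N -> mxn Sh i t =
  if ((n1 <= i) && (n1 <= t))%N then mxn (Uq (n - n1)) (i - n1) (t - n1) else 0.
Proof.
move=> hi; case: (ltnP t n) => ht; first by rewrite (mxn_ord _ hi ht) mxE.
by rewrite mxn_outr // Ucol0 ?if_same //; lia.
Qed.

Lemma Sh_col (m : 'I_n) : (n1 <= m)%N -> Sh *m R *m ecv n m = ecv n m.
Proof.
move=> hm; apply/matrixP => i c; rewrite [c]ord1 colE [RHS]mxE.
rewrite -(mxnE (Sh *m R)) mulmx_nat.
rewrite (big_cat_nat (n := n1)) //= ?n1_le_n //.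
rewrite big_nat_cond big1 ?add0r; last first.
  move=> t /andP [/andP [_ ht] _]; rewrite mxn_Sh //.
  by rewrite (leqNgt n1 t) ht andbF mul0r.
rewrite -{1}[n1]add0n big_addn.
rewrite (eq_big_nat _ _ (F2 := fun t => if (n1 <= i)%N then
   mxn (Uq (n - n1)) (i - n1) t * mxn R t (m - n1) else 0)); last first.
  move=> t /andP [_ ht]; rewrite mxn_Sh // leq_addl andbT addnK.
  case: ifP => _; last by rewrite mul0r.
  congr (_ * _); rewrite -[in LHS](subnK hm) toepN //; have := ltn_ord m; lia.
case: (leqP n1 i) => hi.

  transitivity (mxn (Uq (n - n1) *m R) (i - n1) (m - n1)).
    rewrite mulmx_nat [RHS](big_cat_nat (n := n - n1)) //= ?leq_subr //.
    rewrite [X in _ = _ + X]big_nat_cond [X in _ = _ + X]big1 ?addr0 //.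
    by move=> t /andP [/andP [ht _] _]; rewrite Ucol0 // mul0r.
  rewrite UR; first last.
  - have := ltn_ord m; lia.
  - have := ltn_ord i; lia.
  have e : ((i - n1)%N == (m - n1)%N) = ((i:nat) == m) by apply/eqP/eqP; lia.
  exact: (congr1 (fun b : bool => b%:R) e).
rewrite big1_eq (_ : (i == m :> nat) = false) //; apply/eqP; lia.
Qed.

Lemma Wp_Sh : Wp n1 = Sh.
Proof.
apply/eqP; rewrite -subr_eq0; apply/eqP; apply: (uniq0 Hpd (k := n1)).
  move=> i j hj; rewrite !mxE (W_supp R (@Hp1 n1)); last by rewrite /Ip -!ltnNge hj orbT.
  by rewrite (leqNgt n1 j) hj andbF subrr.
by move=> m hm; rewrite !mulmxBl Wp_col // Sh_col // subrr.
Qed.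

Lemma R3 a b (ha : (a < n)%N) (hb : (b < n)%N) :
  mxn (Wp n1) a b = if ((n1 <= a) && (n1 <= b))%N then mxn (Uq (n - n1)) (a - n1) (b - n1) else 0.
Proof. by rewrite Wp_Sh (mxn_ord _ ha hb) mxE. Qed.


Lemma Rrec a b (ha : (a < n)%N) (hb : (b < n)%N) :
  mxn (invmx R) a b = alpha a b +
   (if ((n1 <= a) && (n1 <= b))%N then mxn (invmx R) (a - n1) (b - n1) - beta (a - n1) (b - n1) else 0).
Proof.
rewrite R1 // R3 //; case: ifP => // /andP [h1 h2].
by rewrite [in RHS]R2 ?addrK //; lia.
Qed.

Definition Tsum (g : nat -> nat -> C) o K a b := \sum_(0 <= q < K)
  (if ((((q + o) * n1) <= a) && (((q + o) * n1) <= b))%N then g (a - (q + o) * n1)%N (b - (q + o) * n1)%N else 0).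

Lemma T_rec g o K a b : Tsum g o K.+1 a b =
  (if (((o * n1) <= a) && ((o * n1) <= b))%N then g (a - o * n1)%N (b - o * n1)%N else 0) +
  (if ((n1 <= a) && (n1 <= b))%N then Tsum g o K (a - n1) (b - n1) else 0).
Proof.
rewrite /Tsum big_nat_recl //= add0n; congr (_ + _); case: ifP => h.
  apply: eq_bigr => q _.
  have -> : ((q.+1 + o) * n1 = n1 + (q + o) * n1)%N by rewrite addSn mulSn.
  move: ((q + o) * n1)%N => X.
  have -> : (n1 + X <= a)%N = (X <= a - n1)%N by move: h; lia.
  have -> : (n1 + X <= b)%N = (X <= b - n1)%N by move: h; lia.
  by rewrite !subnDA.
apply: big1 => q _.
have -> : ((q.+1 + o) * n1 = n1 + (q + o) * n1)%N by rewrite addSn mulSn.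
move: ((q + o) * n1)%N => X.
rewrite ifF //; move: h; lia.
Qed.

Lemma T_ext g o K a b : (a < (K + o) * n1)%N -> Tsum g o K.+1 a b = Tsum g o K a b.
Proof.
move=> h; rewrite /Tsum big_nat_recr //= ifF ?addr0 //.
by apply/negbTE; rewrite negb_and -!ltnNge h.
Qed.

Lemma main_nat a b : (a < n)%N -> (b < n)%N ->
  mxn (invmx R) a b = Tsum alpha 0 n2 a b - Tsum beta 1 n2 a b.
Proof.
have eA : forall g o a b, Tsum g o n2 a b = Tsum g o n2.-1.+1 a b by move=> *; rewrite prednK.
have eN : (n2.-1 * n1 = n - n1)%N by rewrite -subn1 mulnBl mul1n mulnC.
elim/ltn_ind: a b => a IH b ha hb.
rewrite Rrec // !eA !T_rec /= !mul0n !mul1n !subn0 /=.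
case: ifP => hc.
  rewrite IH; first last.
  - lia.
  - lia.
  - lia.
  rewrite !eA !T_ext; first last.
  all: try (rewrite ?addn1 ?addn0 ?prednK // ?eN; rewrite ?[(n2 * n1)%N]mulnC; lia).
  ring.
by rewrite !addr0 subr0.
Qed.


Lemma vp_neq0 k : (k < n1)%N -> vp k != 0.
Proof.
move=> hk; have hkn : (k < n)%N by have := n1_le_n; lia.
exact: (vf_neq0 Hpd rkp_inj (@Hp1 0) (@Hp2 0) (@Hp3 0) (j := Ordinal hkn)).
Qed.

Lemma vq_neq0 k : (k < n1)%N -> vq k != 0.
Proof.
move=> hk; have hkn : (n - n1 + k < n)%N by have := n1_le_n; lia.
exact: (vf_neq0 Hpd rkq_inj (@Hq1 n) (@Hq2 n) (@Hq3 n) (j := Ordinal hkn)).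
Qed.

Lemma blk_mxn (M : 'M[C]_n1) (d : nat -> C) s t : (s < n)%N -> (t < n)%N ->
  (forall i j : 'I_n1, M i j = ((i : nat) == j)%:R * d i) ->
  mxn (blkdiag n2 M) s t = (s == t)%:R * d (t %% n1)%N.
Proof.
move=> hs ht hM; rewrite (mxn_ord _ hs ht) mxE /=.
case: eqP => e1.
  rewrite (mxn_ord _ (ltn_pmod s Hn1) (ltn_pmod t Hn1)) hM /=.
  have -> : (s == t) = (s %% n1 == t %% n1)%N.
    by rewrite {1}(divn_eq s n1) {1}(divn_eq t n1) e1; apply/eqP/eqP; lia.
  case: (eqVneq (s %% n1)%N (t %% n1)%N) => [->|ne] //.
  by rewrite !mul0r.
case: eqP => [e|_]; last by rewrite mul0r.
by exfalso; apply: e1; rewrite e.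
Qed.

Lemma quadform (L : 'M[C]_n) (M : 'M[C]_n1) (d : nat -> C) a b : (a < n)%N -> (b < n)%N ->
  (forall i j : 'I_n1, M i j = ((i : nat) == j)%:R * d i) ->
  mxn (ctr L *m blkdiag n2 M *m L) a b = \sum_(0 <= t < n) (mxn L t a)^* * d (t %% n1)%N * mxn L t b.
Proof.
move=> ha hb hM; rewrite mulmx_nat; apply: eq_big_nat => t /andP [_ ht].
rewrite mulmx_nat (sum_delta (t := t)) //.
  rewrite (blk_mxn ht ht hM) eqxx mul1r; congr (_ * _ * _).
  by rewrite (mxn_ord _ ha ht) (mxn_ord _ ht ha) !mxE.
move=> s hs nst; rewrite (blk_mxn hs ht hM) (_ : (s == t) = false) ?mul0r ?mulr0 //.
exact/eqP.
Qed.

Lemma Lp_mxn t b : (t < n)%N -> (b < n)%N ->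
  mxn (Lp R) t b = if (t %/ n1 * n1 <= b)%N then pe (t %% n1)%N (b - t %/ n1 * n1)%N else 0.
Proof.
move=> ht hb; rewrite (mxn_ord _ ht hb) mxE /= -leq_divRL //.
case: ifP => // h.
rewrite (mxn_ord _ (ltn_pmod t Hn1) (ltn_pmod b Hn1)) !mxE /pe /=.
congr (mxn _ _ 0); rewrite [in RHS](divn_eq b n1).
move: h; move: (b %/ n1)%N (t %/ n1)%N (b %% n1)%N => B T r h; nia.
Qed.

Lemma Lq_mxn t b : (t < n)%N -> (b < n)%N ->
  mxn (Lq R) t b = if ((t %/ n1).+1 * n1 <= b)%N then qe (t %% n1)%N (b - (t %/ n1).+1 * n1)%N else 0.
Proof.
move=> ht hb; rewrite (mxn_ord _ ht hb) mxE /= -leq_divRL //.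
case: ifP => // h.
rewrite (mxn_ord _ (ltn_pmod t Hn1) (ltn_pmod b Hn1)) !mxE /qe /=.
have hB : (b %/ n1 < n2)%N by rewrite ltn_divLR // mulnC.
congr (mxn _ _ 0); rewrite [in RHS](divn_eq b n1).
move: h hB; move: (b %/ n1)%N (t %/ n1)%N (b %% n1)%N => B T r h hB; nia.
Qed.

Lemma R4 a b : (a < n)%N -> (b < n)%N ->
  mxn (ctr (Lp R) *m blkdiag n2 (invmx (Vp R)) *m Lp R) a b = Tsum alpha 0 n2 a b.
Proof.
move=> ha hb.
rewrite (quadform (Lp R) (d := fun k => (vp k)^-1)) //; last first.
  move=> i j; rewrite (diag_inv (d := vp)) ?mxE //.
  - by move=> i' j'; rewrite mxE.
  - by move=> i'; apply: vp_neq0.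
rewrite (eq_big_nat _ _ (F2 := fun t =>
   (if (t %/ n1 * n1 <= a)%N then pe (t %% n1)%N (a - t %/ n1 * n1)%N else 0)^* * (vp (t %% n1)%N)^-1 *
   (if (t %/ n1 * n1 <= b)%N then pe (t %% n1)%N (b - t %/ n1 * n1)%N else 0))); last first.
  by move=> t /andP [_ ht]; rewrite !Lp_mxn.
rewrite sum_reidx /Tsum; apply: eq_bigr => q _; rewrite addn0.
rewrite (eq_big_nat _ _ (F2 := fun r =>
   (if (q * n1 <= a)%N then pe r (a - q * n1)%N else 0)^* * (vp r)^-1 *
   (if (q * n1 <= b)%N then pe r (b - q * n1)%N else 0))); last first.
  move=> r /andP [_ hr].
  by rewrite divnMDl // divn_small // addn0 modnMDl modn_small.
case: (leqP (q * n1) a) => h1; case: (leqP (q * n1) b) => h2 /=.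
- by apply: eq_bigr => r _; rewrite mulrAC mulrC.
- by apply: big1 => r _; rewrite mulr0.
- by apply: big1 => r _; rewrite conjC0 !mul0r.
- by apply: big1 => r _; rewrite conjC0 !mul0r.
Qed.

Lemma R5 a b : (a < n)%N -> (b < n)%N ->
  mxn (ctr (Lq R) *m blkdiag n2 (invmx (Vq R)) *m Lq R) a b = Tsum beta 1 n2 a b.
Proof.
move=> ha hb.
rewrite (quadform (Lq R) (d := fun k => (vq k)^-1)) //; last first.
  move=> i j; rewrite (diag_inv (d := vq)) ?mxE //.
  - by move=> i' j'; rewrite mxE.
  - by move=> i'; apply: vq_neq0.
rewrite (eq_big_nat _ _ (F2 := fun t =>
   (if ((t %/ n1).+1 * n1 <= a)%N then qe (t %% n1)%N (a - (t %/ n1).+1 * n1)%N else 0)^* * (vq (t %% n1)%N)^-1 *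
   (if ((t %/ n1).+1 * n1 <= b)%N then qe (t %% n1)%N (b - (t %/ n1).+1 * n1)%N else 0))); last first.
  by move=> t /andP [_ ht]; rewrite !Lq_mxn.
rewrite sum_reidx /Tsum; apply: eq_bigr => q _; rewrite addn1.
rewrite (eq_big_nat _ _ (F2 := fun r =>
   (if (q.+1 * n1 <= a)%N then qe r (a - q.+1 * n1)%N else 0)^* * (vq r)^-1 *
   (if (q.+1 * n1 <= b)%N then qe r (b - q.+1 * n1)%N else 0))); last first.
  move=> r /andP [_ hr].
  by rewrite divnMDl // divn_small // addn0 modnMDl modn_small.
case: (leqP (q.+1 * n1) a) => h1; case: (leqP (q.+1 * n1) b) => h2 /=.
- by apply: eq_bigr => r _; rewrite mulrAC mulrC.
- by apply: big1 => r _; rewrite mulr0.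
- by apply: big1 => r _; rewrite conjC0 !mul0r.
- by apply: big1 => r _; rewrite conjC0 !mul0r.
Qed.


Lemma mxnB (A B : 'M[C]_n) a b : (a < n)%N -> (b < n)%N -> mxn (A - B) a b = mxn A a b - mxn B a b.
Proof. by move=> ha hb; rewrite !(mxn_ord _ ha hb) !mxE. Qed.

Lemma final : invmx R =
    ctr (@Lp C n1 n2 R) *m @blkdiag C n1 n2 (invmx (@Vp C n1 n2 R)) *m @Lp C n1 n2 R
    - ctr (@Lq C n1 n2 R) *m @blkdiag C n1 n2 (invmx (@Vq C n1 n2 R)) *m @Lq C n1 n2 R.
Proof.
apply/matrixP => i j.
rewrite -[LHS](mxnE (invmx R)) main_nat // -[RHS]mxnE mxnB // R4 // R5 //.
Qed.

End Main.

Unset Implicit Arguments.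
Set Strict Implicit.

Theorem mainTheorem5 (C : numClosedFieldType) (n1 n2 : nat)
  (Hn1 : (1 <= n1)%N) (Hn2 : (1 <= n2)%N) (R : 'M[C]_(n1 * n2))
  (Hherm : herm_mx R) (Hpd : posdef R) (Htoep : @block_toeplitz C n1 n2 R) :
  invmx R =
    ctr (@Lp C n1 n2 R) *m @blkdiag C n1 n2 (invmx (@Vp C n1 n2 R)) *m @Lp C n1 n2 R
    - ctr (@Lq C n1 n2 R) *m @blkdiag C n1 n2 (invmx (@Vq C n1 n2 R)) *m @Lq C n1 n2 R.
Proof. exact: final. Qed.
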